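(* Let $\tau:\mathcal{X}\to\mathcal{X}$ be a continuous map on a compact metric space $(\mathcal{X},d)$ having at least one fixed point. Then $\tau$ is mixing if and only if $\tau$ is an asymptotic deformation.
   Context: $\tau^n$ is the $n$-fold composition of $\tau$. $\tau$ is mixing if there is $x_*\in\mathcal{X}$ with $\lim_{n\to\infty}\tau^n(x)=x_*$ for all $x\in\mathcal{X}$. $\tau$ is an asymptotic deformation if for all $x,y\in\mathcal{X}$ the sequence $d(\tau^n(x),\tau^n(y))$ converges and $\lim_{n\to\infty}d(\tau^n(x),\tau^n(y))\neq d(x,y)$ whenever $x\neq y$. *)

(* Defs.v *)
(* compact metric space = metricType R with compact setT *)
From HB Require Import structures.
From mathcomp Require Import all_boot all_order all_algebra.
From mathcomp Require Import all_classical all_reals all_analysis.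
Set Implicit Arguments. Unset Strict Implicit. Unset Printing Implicit Defensive.
Import Order.TTheory GRing.Theory Num.Theory numFieldTopology.Exports numFieldNormedType.Exports.
Local Open Scope classical_set_scope.
Local Open Scope ring_scope.

Definition mixing (R : realType) (X : metricType R) (tau : X -> X) : Prop :=
  exists xs : X, forall x : X, (fun n : nat => iter n tau x) @ \oo --> xs.

Definition asymptotic_deformation (R : realType) (X : metricType R)
    (tau : X -> X) : Prop :=
  forall x y : X,
    cvgn (fun n : nat => (mdist (iter n tau x) (iter n tau y) : R)) /\
    (x <> y -> limn (fun n : nat => (mdist (iter n tau x) (iter n tau y) : R)) <> mdist x y).

(* Main.v *)
Require Import Defs.
From HB Require Import structures.
From mathcomp Require Import all_boot all_order all_algebra.
From mathcomp Require Import all_classical all_reals all_analysis.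
From mathcomp Require Import lra.
Local Open Scope classical_set_scope.
Local Open Scope ring_scope.
Import Order.TTheory GRing.Theory Num.Theory numFieldTopology.Exports numFieldNormedType.Exports.

Section Helpers.
Variables (R : realType) (X : metricType R).

Lemma dist_cont (y : X) : continuous (fun z : X => (mdist z y : R)).
Proof.
move=> z; apply/cvgrPdist_lt => e e0.
have := (proj1 (@metricType_numDomainType.fcvgrPdist_lt R X (nbhs z) _ z) (@cvg_refl _ _)) e e0.
move=> H; near=> t.
have hzt : mdist z t < e by near: t; exact: H.
have h1 := metric_triangle z t y.
have h2 := metric_triangle t z y.
have h3 := metric_sym z t.
rewrite ltr_distl; apply/andP; split; lra.
Unshelve. all: by end_near.
Qed.

Lemma iter_cont (tau : X -> X) m : continuous tau -> continuous (iter m tau).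
Proof.
move=> ct; elim: m => [|m IH] z /=; first exact: cvg_id.
exact: (continuous_comp (IH z) (ct _)).
Qed.

Lemma cluster_val (T : topologicalType) (F : set_system T) (g : T -> R) a L :
  Filter F -> {for a, continuous g} -> cluster F a -> g @ F --> L -> g a = L.
Proof.
move=> FF ga cFa gL; apply/esym; apply: Rhausdorff.
apply: (cvg_cluster gL) => A B gA Bn.
have := cFa _ _ gA (ga _ Bn).
by move=> [w [Aw Bw]]; exists (g w).
Qed.

End Helpers.

Theorem mainTheorem9 (R : realType) (X : metricType R) (tau : X -> X) :
  compact [set: X] -> continuous tau -> (exists x0 : X, tau x0 = x0) ->
  (mixing tau <-> asymptotic_deformation tau).
Proof.
move=> cX ct [x0 fx0]; split.
- move=> [xs hxs] x y.
  have hd : (fun n => (mdist (iter n tau x) (iter n tau y) : R)) @ \oo --> 0.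
    apply/cvgrPdist_lt => e e0.
    have e20 : 0 < e / 2 by rewrite divr_gt0.
    have := metricType_numDomainType.cvgr_dist_lt (hxs x) e20.
    have := metricType_numDomainType.cvgr_dist_lt (hxs y) e20.
    move=> Hy Hx; near=> n.
    have a1 : mdist xs (iter n tau y) < e / 2 by near: n; exact: Hy.
    have a2 : mdist xs (iter n tau x) < e / 2 by near: n; exact: Hx.
    have t1 := metric_triangle (iter n tau x) xs (iter n tau y).
    have t2 := metric_sym (iter n tau x) xs.
    have g0 := mdist_ge0 (iter n tau x) (iter n tau y).
    rewrite sub0r normrN ger0_norm //; lra.
  split; first exact: cvgP hd.
  move=> xy; rewrite (cvg_lim (@Rhausdorff R) hd) => /esym/mdist_positivity.
  exact: xy.
- move=> AD.
  have fix0 : forall n, iter n tau x0 = x0.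
    by elim=> [|n IH] //=; rewrite IH fx0.
  exists x0 => x.
  pose s := fun n : nat => iter n tau x.
  have [cv _] := AD x x0.
  set L := limn _ in cv.
  have hL : (fun n => (mdist (s n) x0 : R)) @ \oo --> L.
    have -> : (fun n => (mdist (s n) x0 : R)) =
      (fun n => mdist (iter n tau x) (iter n tau x0)).
      by apply/funext => n; rewrite fix0.
    exact: cv.
  have [a [_ ca]] := cX (s @ \oo) _ filterT.
  have key : forall m, (mdist (iter m tau a) x0 : R) = L.
    move=> m.
    apply: (@cluster_val R X (s @ \oo) (fun z => mdist (iter m tau z) x0) a L _ _ ca).
      exact: (continuous_comp (@iter_cont R X tau m ct a) (@dist_cont R X x0 _)).
    rewrite -(cvg_shiftn m) in hL.
    have E : (fun n => (mdist (s (n + m)%N) x0 : R)) =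
        (fun z => (mdist (iter m tau z) x0 : R)) \o s.
      by apply/funext => n /=; rewrite /s addnC iterD.
    rewrite /= E in hL.
    exact: hL.
  have ax0 : a = x0.
    apply: contrapT => nax.
    have [_ hne] := AD a x0.
    apply: (hne nax).
    have -> : (fun n => (mdist (iter n tau a) (iter n tau x0) : R)) = (fun _ => L).
      by apply/funext => n; rewrite fix0 key.
    rewrite (cvg_lim (@Rhausdorff R) (cvg_cst L)).
    by have := key 0%N.
  have L0 : L = 0 by rewrite -(key 0%N) ax0 /= mdistxx.
  apply/metricType_numDomainType.cvgrPdist_lt => e e0.
  move/cvgrPdist_lt : hL => /(_ e e0).
  apply: filterS => n.
  by rewrite L0 sub0r normrN ger0_norm ?mdist_ge0 // metric_sym.
Unshelve. all: by end_near.
Qed.
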